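(* Fix $\vartheta_1\in(0,\pi/2)$ and an integer $k\ge0$. Then $$\min_{\eta\in I_k}\Phi(\eta+\pi)\ \ge\ \min_{\eta\in I_k}\Phi(\eta)+\pi(1-\cos\vartheta_1).$$
   Context: For integers $k\ge0$ let $I_k=[\vartheta_1+k\pi,(k+1)\pi-\vartheta_1]$ (note $\eta\in I_k$ iff $\eta+\pi\in I_{k+1}$). For $\eta\in I_k$ set $\gamma(\eta)=\sqrt{1-\sin^2\vartheta_1/\sin^2\eta}$ and $$\Phi(\eta)=-\eta\,\gamma(\eta)+k\pi+\arccos\Big(\frac{\cos(\eta-k\pi)}{\cos\vartheta_1}\Big),\qquad\arccos\in[0,\pi].$$ *)

(* Defs.v *)
From Stdlib Require Import Reals.
Open Scope R_scope.

Definition Ik (th1 : R) (k : nat) (eta : R) : Prop :=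
  th1 + INR k * PI <= eta <= (INR k + 1) * PI - th1.

Definition gam (th1 eta : R) : R :=
  sqrt (1 - (sin th1)^2 / (sin eta)^2).

(* Phi(eta) for eta in I_k (k is the index of the interval containing eta);
   Stdlib's acos takes values in [0, PI]. *)
Definition Phi (th1 : R) (k : nat) (eta : R) : R :=
  - eta * gam th1 eta + INR k * PI + acos (cos (eta - INR k * PI) / cos th1).

Definition is_min_on (S : R -> Prop) (f : R -> R) (m : R) : Prop :=
  (exists x, S x /\ f x = m) /\ (forall x, S x -> m <= f x).

(* Main.v *)
Require Import Defs.
From Stdlib Require Import Reals Lra.
Open Scope R_scope.

Lemma cp_plus f g x : continuity_pt f x -> continuity_pt g x -> continuity_pt (fun y => f y + g y) x.
Proof. intros; exact (continuity_pt_plus f g x H H0). Qed.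
Lemma cp_minus f g x : continuity_pt f x -> continuity_pt g x -> continuity_pt (fun y => f y - g y) x.
Proof. intros; exact (continuity_pt_minus f g x H H0). Qed.
Lemma cp_mult f g x : continuity_pt f x -> continuity_pt g x -> continuity_pt (fun y => f y * g y) x.
Proof. intros; exact (continuity_pt_mult f g x H H0). Qed.
Lemma cp_opp f x : continuity_pt f x -> continuity_pt (fun y => - f y) x.
Proof. intros; exact (continuity_pt_opp f x H). Qed.
Lemma cp_div f g x : continuity_pt f x -> continuity_pt g x -> g x <> 0 -> continuity_pt (fun y => f y / g y) x.
Proof. intros; exact (continuity_pt_div f g x H H0 H1). Qed.
Lemma cp_comp (f : R -> R) g x : continuity_pt f x -> continuity_pt g (f x) -> continuity_pt (fun y => g (f y)) x.
Proof. intros; exact (continuity_pt_comp f g x H H0). Qed.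
Lemma cp_const c x : continuity_pt (fun _ => c) x.
Proof. apply continuity_pt_const; intros a b; reflexivity. Qed.
Lemma cp_id x : continuity_pt (fun y => y) x.
Proof. apply derivable_continuous_pt, derivable_pt_id. Qed.
Lemma cp_pow f n x : continuity_pt f x -> continuity_pt (fun y => f y ^ n) x.
Proof. intros H. apply (cp_comp f (fun z => z ^ n)); auto.
  apply derivable_continuous_pt, derivable_pt_pow. Qed.
Lemma cp_sin f x : continuity_pt f x -> continuity_pt (fun y => sin (f y)) x.
Proof. intros H. apply (cp_comp f sin); auto. apply continuity_sin. Qed.
Lemma cp_cos f x : continuity_pt f x -> continuity_pt (fun y => cos (f y)) x.
Proof. intros H. apply (cp_comp f cos); auto. apply continuity_cos. Qed.

Lemma sqrt_cont x : continuity_pt sqrt x.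
Proof.
  destruct (Rle_dec 0 x). apply continuity_pt_sqrt; auto.
  apply (continuity_pt_locally_ext (fun _ => 0) sqrt (- x) x). lra.
  intros y Hy. unfold Rdist in Hy. apply Rabs_def2 in Hy. rewrite sqrt_neg_0; lra.
  apply cp_const.
Qed.
Lemma cp_sqrt f x : continuity_pt f x -> continuity_pt (fun y => sqrt (f y)) x.
Proof. intros H. apply (cp_comp f sqrt); auto. apply sqrt_cont. Qed.
Lemma cp_atan f x : continuity_pt f x -> continuity_pt (fun y => atan (f y)) x.
Proof. intros H. apply (cp_comp f atan); auto. apply derivable_continuous_pt, derivable_pt_atan. Qed.

Lemma acos_cont_pos y : 1 <= y -> continuity_pt acos y.
Proof.
  intros Hy.
  apply (continuity_pt_locally_ext (fun x => atan (sqrt (1 - x²) / x)) acos 1 y). lra.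
  intros z Hz. unfold Rdist in Hz. apply Rabs_def2 in Hz. rewrite acos_atan; lra.
  apply cp_atan, cp_div. apply cp_sqrt, cp_minus. apply cp_const.
  unfold Rsqr. apply cp_mult; apply cp_id. apply cp_id. lra.
Qed.

Lemma acos_cont y : continuity_pt acos y.
Proof.
  destruct (Rle_dec 1 y). apply acos_cont_pos; auto.
  destruct (Rle_dec y (-1)).
  - apply (continuity_pt_locally_ext (fun x => PI - acos (- x)) acos 1 y). lra.
    intros z _. rewrite acos_opp. ring.
    apply cp_minus. apply cp_const. apply (cp_comp (fun x => - x) acos).
    apply cp_opp, cp_id. apply acos_cont_pos. lra.
  - apply derivable_continuous_pt, derivable_pt_acos. lra.
Qed.
Lemma cp_acos f x : continuity_pt f x -> continuity_pt (fun y => acos (f y)) x.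
Proof. intros H. apply (cp_comp f acos); auto. apply acos_cont. Qed.

Lemma Phi_cont th1 k c : sin c <> 0 -> cos th1 <> 0 -> continuity_pt (Phi th1 k) c.
Proof.
  intros Hs Hc. unfold Phi, gam.
  apply cp_plus. apply cp_plus. apply cp_mult. apply cp_opp, cp_id.
  apply cp_sqrt, cp_minus. apply cp_const. apply cp_div. apply cp_const.
  apply cp_pow, cp_sin, cp_id. apply pow_nonzero; auto.
  apply cp_const. apply cp_acos. apply cp_div. apply cp_cos, cp_minus. apply cp_id. apply cp_const.
  apply cp_const. auto.
Qed.

Lemma sin_shift2 x k : sin (x + INR k * PI) ^ 2 = sin x ^ 2.
Proof.
  induction k. { simpl INR. rewrite Rmult_0_l, Rplus_0_r. reflexivity. }
  rewrite S_INR. replace (x + (INR k + 1) * PI) with ((x + INR k * PI) + PI) by ring.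
  rewrite neg_sin. rewrite <- IHk. ring.
Qed.

Lemma sin_Ik th1 k eta : 0 < th1 < PI / 2 -> Ik th1 k eta -> 0 < sin eta ^ 2.
Proof.
  intros Ht [H1 H2].
  replace eta with ((eta - INR k * PI) + INR k * PI) by ring.
  rewrite sin_shift2.
  assert (0 < sin (eta - INR k * PI)) by (apply sin_gt_0; lra).
  nra.
Qed.

Lemma gam_le th1 eta : 0 < th1 < PI / 2 -> 0 < sin eta ^ 2 -> gam th1 eta <= cos th1.
Proof.
  intros Ht Hs. unfold gam.
  assert (Hc : 0 < cos th1) by (apply cos_gt_0; lra).
  rewrite <- (sqrt_pow2 (cos th1)) by lra.
  apply sqrt_le_1_alt.
  pose proof (sin2_cos2 th1) as E1. pose proof (sin2_cos2 eta) as E2.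
  rewrite !Rsqr_pow2 in E1, E2.
  assert (Hle : sin eta ^ 2 <= 1) by (assert (0 <= cos eta ^ 2) by nra; lra).
  assert (sin th1 ^ 2 <= sin th1 ^ 2 / sin eta ^ 2).
  { unfold Rdiv. rewrite <- (Rmult_1_r (sin th1 ^ 2)) at 1.
    apply Rmult_le_compat_l. nra.
    rewrite <- Rinv_1. apply Rinv_le_contravar; lra. }
  lra.
Qed.

Lemma Phi_shift th1 k eta :
  Phi th1 (S k) (eta + PI) = Phi th1 k eta + PI * (1 - gam th1 eta).
Proof.
  unfold Phi.
  assert (gam th1 (eta + PI) = gam th1 eta).
  { unfold gam. rewrite neg_sin. f_equal. f_equal. f_equal. ring. }
  rewrite H, S_INR.
  replace (eta + PI - (INR k + 1) * PI) with (eta - INR k * PI) by ring.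
  ring.
Qed.

Theorem lemma5p24 (th1 : R) (k : nat) (Hth1 : 0 < th1 < PI / 2) :
  exists m1 m2 : R,
    is_min_on (Ik th1 k) (fun eta => Phi th1 (S k) (eta + PI)) m1 /\
    is_min_on (Ik th1 k) (Phi th1 k) m2 /\
    m1 >= m2 + PI * (1 - cos th1).
Proof.
  assert (Hc : 0 < cos th1) by (apply cos_gt_0; lra).
  assert (Hab : th1 + INR k * PI <= (INR k + 1) * PI - th1) by (pose proof PI_RGT_0; lra).
  assert (Hsn : forall c, Ik th1 k c -> sin c <> 0).
  { intros c Hcc. pose proof (sin_Ik th1 k c Hth1 Hcc). intro E. rewrite E in H. simpl in H. lra. }
  destruct (continuity_ab_min (Phi th1 k) _ _ Hab) as [x2 [Hx2 Ix2]].
  { intros c Hcc. apply Phi_cont; [apply Hsn; exact Hcc | lra]. }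
  destruct (continuity_ab_min (fun eta => Phi th1 (S k) (eta + PI)) _ _ Hab) as [x1 [Hx1 Ix1]].
  { intros c Hcc. apply (cp_comp (fun y => y + PI) (Phi th1 (S k))).
    apply cp_plus. apply cp_id. apply cp_const.
    apply Phi_cont; [ | lra]. rewrite neg_sin. pose proof (Hsn c Hcc). lra. }
  exists (Phi th1 (S k) (x1 + PI)), (Phi th1 k x2).
  split; [split; [exists x1; split; auto | exact Hx1] |].
  split; [split; [exists x2; split; auto | exact Hx2] |].
  rewrite Phi_shift.
  pose proof (gam_le th1 x1 Hth1 (sin_Ik th1 k x1 Hth1 Ix1)).
  pose proof (Hx2 x1 Ix1). pose proof PI_RGT_0. nra.
Qed.
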